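(* Let $A,B,C,D$ be real random variables on a common probability space with finite second moments, $\mathbb{E}[A]\neq0$, $\mathbb{E}[C]\neq 0$, and set $R=\mathbb{E}[A]/\mathbb{E}[C]$. Let $n,m\ge1$, let $(A_i,B_i,C_i,D_i)_{i=1,\dots,n}$ be i.i.d. copies of $(A,B,C,D)$, and let $(B_i,D_i)_{i=n+1,\dots,n+m}$ be i.i.d. copies of $(B,D)$, independent of the first $n$ samples. For $\alpha,\beta\in\mathbb{R}$ define the exact and approximate control-variate numerators and denominators $$N_\alpha=\overline{A_n}+\alpha(\mathbb{E}[B]-\overline{B_n}),\quad M_\beta=\overline{C_n}+\beta(\mathbb{E}[D]-\overline{D_n}),$$ $$\tilde N_\alpha=\overline{A_n}+\alpha(\overline{B_{n+m}}-\overline{B_n}),\quad \tilde M_\beta=\overline{C_n}+\beta(\overline{D_{n+m}}-\overline{D_n}).$$ Then for all $\alpha,\beta\in\mathbb{R}$, $$\Phi(\tilde N_\alpha,\tilde M_\beta)-\Phi(\overline{A_n},\overline{C_n})=\frac{m}{n+m}\Big(\Phi(N_\alpha,M_\beta)-\Phi(\overline{A_n},\overline{C_n})\Big),$$ $$\Phi(\tilde N_\alpha,\overline{C_n})-\Phi(\overline{A_n},\overline{C_n})=\frac{m}{n+m}\Big(\Phi(N_\alpha,\overline{C_n})-\Phi(\overline{A_n},\overline{C_n})\Big).$$ Consequently the minimizers over $(\alpha,\beta)$ (resp. over $\alpha$) of the approximate-control-variate quantities coincide with those of the exact-control-variate quantities.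
   Context: For random variables $X$ with samples $X_1,X_2,\dots$, $\overline{X_k}=\frac1k\sum_{i=1}^k X_i$. For real random variables $X,Z$ with finite second moments and $\mathbb{E}[Z]\neq0$, define the first-order (delta-method) approximation of the variance of the ratio $X/Z$: $$\Phi(X,Z)=\frac{\mathrm{Var}(X)}{\mathbb{E}[Z]^2}+\frac{\mathbb{E}[X]^2}{\mathbb{E}[Z]^4}\mathrm{Var}(Z)-2\frac{\mathbb{E}[X]}{\mathbb{E}[Z]^3}\mathrm{Cov}(X,Z).$$ The paper uses $\Phi$ of numerator and denominator estimators as the variance of the corresponding ratio estimator of $R$: $\overline{A_n}/\overline{C_n}$ (MC/MC), $N_\alpha/M_\beta$ (CV/CV, with known $\mathbb{E}[B],\mathbb{E}[D]$), $N_\alpha/\overline{C_n}$ (CV/MC), and their approximate-control-variate analogues $\tilde N_\alpha/\tilde M_\beta$ (ACV/ACV) and $\tilde N_\alpha/\overline{C_n}$ (ACV/MC), in which the unknown control-variate means are replaced by sample means over $n+m$ samples. *)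

(* Defs.v *)
From HB Require Import structures.
From mathcomp Require Import all_boot all_order all_algebra.
From mathcomp Require Import all_classical all_reals all_analysis.
Set Implicit Arguments.
Unset Strict Implicit.
Unset Printing Implicit Defensive.
Import Order.TTheory GRing.Theory Num.Theory.
Local Open Scope classical_set_scope.
Local Open Scope ring_scope.

Section Defs.
Context {d : measure_display} {T : measurableType d} {R : realType}.
Variable P : probability T R.

(** Sample mean  \overline{X_k} = (1/k) sum_{i=1}^k X_i  (0-based indices 0..k-1). *)
Definition smean (X : nat -> T -> R) (k : nat) : T -> R :=
  fun t => (\sum_(i < k) X i t) / k%:R.

(** Delta-method approximation of Var(X/Z).  All moments appearing are finite
    under the hypotheses of the theorem, so [fine] is just the real value. *)
Definition Phi (X Z : T -> R) : R :=
  let EX := fine 'E_P[X] in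
  let EZ := fine 'E_P[Z] in
  fine 'V_P[X] / EZ ^+ 2 + EX ^+ 2 / EZ ^+ 4 * fine 'V_P[Z]
  - 2 * EX / EZ ^+ 3 * fine (covariance P X Z).

Definition mutually_independent (I : set nat) (E : nat -> set (set T)) : Prop :=
  forall (F : seq nat) (e : nat -> set T),
    uniq F -> [set` F] `<=` I -> (forall k, k \in F -> E k (e k)) ->
    P (\bigcap_(k in [set` F]) e k) = (\prod_(k <- F) P (e k))%E.

Definition events_of {d' : measure_display} {V : measurableType d'}
  (X : T -> V) : set (set T) :=
  [set e | exists S : set V, measurable S /\ e = X @^-1` S].

Definition same_law {d' : measure_display} {V : measurableType d'}
  (X Y : T -> V) : Prop :=
  forall S : set V, measurable S -> P (X @^-1` S) = P (Y @^-1` S).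

End Defs.

(* Main.v *)
Require Import Defs.
From HB Require Import structures.
From mathcomp Require Import all_boot all_order all_algebra.
From mathcomp Require Import all_classical all_reals all_analysis.
From mathcomp Require Import measurable_realfun.
From mathcomp Require Import ring lra.
Import Order.TTheory GRing.Theory Num.Theory.
Local Open Scope classical_set_scope.
Local Open Scope ring_scope.

Set Implicit Arguments.
Unset Strict Implicit.
Unset Printing Implicit Defensive.

Section H.
Context d (T : measurableType d) (R : realType) (P : probability T R).

Definition mkmf d' (W : measurableType d') (f : T -> W)
  (mf : measurable_fun setT f) : {mfun T >-> W} :=
  MeasurableFun.Pack (MeasurableFun.Class (isMeasurableFun.Build _ _ _ _ f mf)).

Lemma mkmfE d' (W : measurableType d') (f : T -> W) (mf : measurable_fun setT f) :
  (mkmf mf : T -> W) = f.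
Proof. by []. Qed.

Local Open Scope ereal_scope.

Lemma transfer_ge0 d' (W : measurableType d') (V V' : T -> W)
  (mV : measurable_fun setT V) (mV' : measurable_fun setT V')
  (g : W -> \bar R) : same_law P V V' -> measurable_fun setT g ->
  (forall y, 0 <= g y) ->
  \int[P]_x g (V x) = \int[P]_x g (V' x).
Proof.
move=> hl mg g0.
have := ge0_integral_distribution (P:=P) (mkmf mV) mg g0.
have := ge0_integral_distribution (P:=P) (mkmf mV') mg g0.
rewrite /= => <- <-.
apply: eq_measure_integral => A mA _.
exact: hl.
Qed.

Lemma integrable_eqm d' (W : measurableType d') (m1 m2 : {measure set W -> \bar R})
  (f : W -> \bar R) : (forall A, measurable A -> m1 A = m2 A) ->
  m1.-integrable setT f -> m2.-integrable setT f.
Proof.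
move=> m12 /integrableP[mf fi]; apply/integrableP; split => //.
by rewrite (eq_measure_integral m1) // => A mA _; rewrite m12.
Qed.

Lemma indep_EM (X Y : T -> R) (mX : measurable_fun setT X)
  (mY : measurable_fun setT Y) :
  X \in Lfun P 2%:E -> Y \in Lfun P 2%:E ->
  (forall S1 S2 : set R, measurable S1 -> measurable S2 ->
     P (X @^-1` S1 `&` Y @^-1` S2) = P (X @^-1` S1) * P (Y @^-1` S2)) ->
  'E_P[(X * Y)%R] = 'E_P[X] * 'E_P[Y].
Proof.
move=> X2 Y2 hind.
have Pfin : P setT \is a fin_num := fin_num_measure P _ measurableT.
have X1 := Lfun_subset12 Pfin X2.
have Y1 := Lfun_subset12 Pfin Y2.
have XY1 := Lfun2_mul_Lfun1 X2 Y2.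
have iX := (Lfun1_integrable _ _).1 X1.
set mX' := mkmf mX.
set mY' := mkmf mY.
set mXY := mkmf (measurable_fun_pair mX mY).
pose mu1 := distribution P mX'.
pose mu2 := distribution P mY'.
pose f : R * R -> \bar R := fun z => (z.1 * z.2)%:E.
have mf : measurable_fun setT f.
  apply/measurable_EFinP; apply: measurable_funM.
    exact: measurable_fst.
  exact: measurable_snd.
have prodE : forall A, measurable A -> (mu1 \x mu2) A = distribution P mXY A.
  apply: product_measure_unique => A B mA mB.
  rewrite /mu1 /mu2 /distribution /pushforward /= -hind //.
have iY := (Lfun1_integrable _ _).1 Y1.
have iXY := (Lfun1_integrable _ _).1 XY1.
have EXY : 'E_P[(X * Y)%R] = \int[distribution P mXY]_z f z.
  rewrite integral_distribution //; first by rewrite unlock.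
have iF : (mu1 \x mu2).-integrable setT f.
  apply: (integrable_eqm (m1 := distribution P mXY)).
    by move=> A mA; apply/esym/prodE.
  have := integrable_pushforward (mu := P) (D := setT) (measurable_funPT mXY) mf.
  by rewrite preimage_setT; apply => //.
have i2 : mu2.-integrable setT EFin.
  have := integrable_pushforward (mu := P) (D := setT) (measurable_funPT mY') (f := EFin) (@EFin_measurable R setT).
  by rewrite preimage_setT; apply => //.
have i1 : mu1.-integrable setT EFin.
  have := integrable_pushforward (mu := P) (D := setT) (measurable_funPT mX') (f := EFin) (@EFin_measurable R setT).
  by rewrite preimage_setT; apply => //.
have E1 : 'E_P[X] = \int[mu1]_x x%:E by rewrite integral_distribution // unlock.
have E2 : 'E_P[Y] = \int[mu2]_x x%:E by rewrite integral_distribution // unlock.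
rewrite EXY (eq_measure_integral (mu1 \x mu2)); last by move=> A mA _; apply/esym/prodE.
rewrite -integral12_prod_meas1 //.
rewrite /fubini_F /f /=.
under eq_integral => x _.
  under eq_integral => y _ do rewrite EFinM.
  rewrite integralZl //.
  over.
rewrite /= -E2.
have fE2 : 'E_P[Y] = (fine 'E_P[Y])%:E by rewrite fineK // expectation_fin_num.
rewrite fE2 integralZr // -E1 //.
Qed.


Lemma transfer_int d' (W : measurableType d') (V V' : T -> W)
  (mV : measurable_fun setT V) (mV' : measurable_fun setT V')
  (g : W -> \bar R) : same_law P V V' -> measurable_fun setT g ->
  P.-integrable setT (g \o V) -> P.-integrable setT (g \o V') ->
  \int[P]_x g (V x) = \int[P]_x g (V' x).
Proof.
move=> hl mg i1 i2.
have := integral_distribution (P:=P) (X := mkmf mV) mg i1.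
have := integral_distribution (P:=P) (X := mkmf mV') mg i2.
rewrite /= => <- <-.
apply: eq_measure_integral => A mA _.
exact: hl.
Qed.

Lemma L2_transfer d' (W : measurableType d') (V V' : T -> W)
  (mV : measurable_fun setT V) (mV' : measurable_fun setT V')
  (p : W -> R) : same_law P V V' -> measurable_fun setT p ->
  (fun t => p (V' t)) \in Lfun P 2%:E -> (fun t => p (V t)) \in Lfun P 2%:E.
Proof.
move=> hl mp.
rewrite !inE => /andP[_]; rewrite !inE /finite_norm => h.
apply/andP; split; first by rewrite inE /=; exact: measurableT_comp.
rewrite inE /finite_norm.
apply: le_lt_trans h; rewrite le_eqVlt; apply/orP; left; apply/eqP.
rewrite unlock /=; congr (_ `^ _).
apply: (@transfer_ge0 _ _ V V' mV mV' (fun y => (`|p y| `^ 2)%:E)) => //.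
apply/measurable_EFinP.
apply: (measurableT_comp (measurable_powR _)) => //.
exact: measurableT_comp.
Qed.

Lemma law_E d' (W : measurableType d') (V V' : T -> W)
  (mV : measurable_fun setT V) (mV' : measurable_fun setT V')
  (p : W -> R) : same_law P V V' -> measurable_fun setT p ->
  (fun t => p (V t)) \in Lfun P 1 -> (fun t => p (V' t)) \in Lfun P 1 ->
  'E_P[fun t => p (V t)] = 'E_P[fun t => p (V' t)].
Proof.
move=> hl mp h1 h2; rewrite unlock.
apply: (@transfer_int _ _ V V' mV mV' (EFin \o p)) => //.
- exact/measurable_EFinP.
- exact: (Lfun1_integrable _ _).1 h1.
- exact: (Lfun1_integrable _ _).1 h2.
Qed.

Lemma law_cv d' (W : measurableType d') (V V' : T -> W)
  (mV : measurable_fun setT V) (mV' : measurable_fun setT V')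
  (p q : W -> R) : same_law P V V' -> measurable_fun setT p ->
  measurable_fun setT q ->
  (fun t => p (V' t)) \in Lfun P 2%:E -> (fun t => q (V' t)) \in Lfun P 2%:E ->
  [/\ (fun t => p (V t)) \in Lfun P 2%:E,
      'E_P[fun t => p (V t)] = 'E_P[fun t => p (V' t)] &
      covariance P (fun t => p (V t)) (fun t => q (V t)) =
      covariance P (fun t => p (V' t)) (fun t => q (V' t))].
Proof.
move=> hl mp mq p2 q2.
have Pfin : P setT \is a fin_num := fin_num_measure P _ measurableT.
have p2' := L2_transfer mV mV' hl mp p2.
have q2' := L2_transfer mV mV' hl mq q2.
have Ep := law_E mV mV' hl mp (Lfun_subset12 Pfin p2') (Lfun_subset12 Pfin p2).
have Eq := law_E mV mV' hl mq (Lfun_subset12 Pfin q2') (Lfun_subset12 Pfin q2).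
split => //.
have pq1 : ((fun t => p (V t)) * (fun t => q (V t)))%R \in Lfun P 1 :=
  Lfun2_mul_Lfun1 p2' q2'.
have pq1' : ((fun t => p (V' t)) * (fun t => q (V' t)))%R \in Lfun P 1 :=
  Lfun2_mul_Lfun1 p2 q2.
have := Lfun_subset12 Pfin p2'; have := Lfun_subset12 Pfin q2'.
have := Lfun_subset12 Pfin p2; have := Lfun_subset12 Pfin q2.
move=> ? ? ? ?.
rewrite covarianceE //.
rewrite covarianceE //.
rewrite Ep Eq.
congr (_ - _).
have := @law_E _ _ V V' mV mV' (fun w => (p w * q w)%R) hl (measurable_funM mp mq).
apply.
- exact (Lfun2_mul_Lfun1 p2' q2').
- exact (Lfun2_mul_Lfun1 p2 q2).
Qed.

Definition cv (X Y : T -> R) : R := fine (covariance P X Y).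

Lemma indep_cv (X Y : T -> R) (mX : measurable_fun setT X)
  (mY : measurable_fun setT Y) :
  X \in Lfun P 2%:E -> Y \in Lfun P 2%:E ->
  (forall S1 S2 : set R, measurable S1 -> measurable S2 ->
     P (X @^-1` S1 `&` Y @^-1` S2) = P (X @^-1` S1) * P (Y @^-1` S2)) ->
  cv X Y = 0%R.
Proof.
move=> X2 Y2 hind.
have Pfin : P setT \is a fin_num := fin_num_measure P _ measurableT.
have X1 := Lfun_subset12 Pfin X2.
have Y1 := Lfun_subset12 Pfin Y2.
have XY1 : (X * Y)%R \in Lfun P 1 := Lfun2_mul_Lfun1 X2 Y2.
rewrite /cv covarianceE // (indep_EM mX mY) // subee //.
by rewrite fin_numM // expectation_fin_num.
Qed.

Lemma cv_fin (X Y : T -> R) : X \in Lfun P 2%:E -> Y \in Lfun P 2%:E ->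
  covariance P X Y = (cv X Y)%:E.
Proof.
move=> X2 Y2.
have Pfin : P setT \is a fin_num := fin_num_measure P _ measurableT.
have X1 := Lfun_subset12 Pfin X2.
have Y1 := Lfun_subset12 Pfin Y2.
have XY1 : (X * Y)%R \in Lfun P 1 := Lfun2_mul_Lfun1 X2 Y2.
by rewrite /cv fineK // covariance_fin_num.
Qed.

Lemma E_fin (X : T -> R) : X \in Lfun P 2%:E ->
  'E_P[X] = (fine 'E_P[X])%:E.
Proof.
move=> X2.
have Pfin : P setT \is a fin_num := fin_num_measure P _ measurableT.
by rewrite fineK // expectation_fin_num // Lfun_subset12.
Qed.

Lemma cvC (X Y : T -> R) : cv X Y = cv Y X.
Proof. by rewrite /cv covarianceC. Qed.

Lemma L2D (f g : T -> R) : f \in Lfun P 2%:E -> g \in Lfun P 2%:E ->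
  (f \+ g)%R \in Lfun P 2%:E.
Proof.
move=> hf hg.
have h12 : (1 <= 2%:E :> \bar R) by rewrite lee1n.
exact: (Lfun_addr_closed P h12).2.
Qed.

Lemma L2Z (f : T -> R) a : f \in Lfun P 2%:E -> (a \o* f)%R \in Lfun P 2%:E.
Proof. by move=> hf; rewrite Lfun_scale // ler1n. Qed.

Lemma L2_lin (X1 X2 X3 : T -> R) x1 x2 x3 c :
  X1 \in Lfun P 2%:E -> X2 \in Lfun P 2%:E -> X3 \in Lfun P 2%:E ->
  (fun t => x1 * X1 t + x2 * X2 t + x3 * X3 t + c)%R \in Lfun P 2%:E.
Proof.
move=> h1 h2 h3.
have E : (fun t => x1 * X1 t + x2 * X2 t + x3 * X3 t + c)%R =
  ((x1 \o* X1 \+ x2 \o* X2) \+ x3 \o* X3 \+ cst c)%R.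
  by apply: boolp.funext => t; rewrite /=; ring.
rewrite E.
by rewrite !L2D ?L2Z ?Lfun_cst.
Qed.

Lemma cv_lin_l (X1 X2 X3 Z : T -> R) x1 x2 x3 c :
  X1 \in Lfun P 2%:E -> X2 \in Lfun P 2%:E -> X3 \in Lfun P 2%:E ->
  Z \in Lfun P 2%:E ->
  cv (fun t => x1 * X1 t + x2 * X2 t + x3 * X3 t + c)%R Z =
  (x1 * cv X1 Z + x2 * cv X2 Z + x3 * cv X3 Z)%R.
Proof.
move=> h1 h2 h3 hZ.
have s1 := L2Z x1 h1.
have s2 := L2Z x2 h2.
have s3 := L2Z x3 h3.
have Pfin : P setT \is a fin_num := fin_num_measure P _ measurableT.
have -> : (fun t => x1 * X1 t + x2 * X2 t + x3 * X3 t + c)%R =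
  ((x1 \o* X1 \+ x2 \o* X2) \+ x3 \o* X3 \+ cst c)%R by apply: boolp.funext => t; rewrite /=; ring.
rewrite /cv covarianceDl ?L2D ?Lfun_cst //.
rewrite (_ : covariance P (cst c) Z = 0); last exact: covariance_cst_l.
rewrite adde0 covarianceDl ?L2D // covarianceDl //.
have Z1 := Lfun_subset12 Pfin hZ.
have := Lfun_subset12 Pfin h1; have := Lfun_subset12 Pfin h2.
have := Lfun_subset12 Pfin h3; move=> ? ? ?.
have : (X1 * Z)%R \in Lfun P 1 := Lfun2_mul_Lfun1 h1 hZ.
have : (X2 * Z)%R \in Lfun P 1 := Lfun2_mul_Lfun1 h2 hZ.
have : (X3 * Z)%R \in Lfun P 1 := Lfun2_mul_Lfun1 h3 hZ.
move=> ? ? ?.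
rewrite !covarianceZl //.
rewrite (cv_fin h1 hZ) (cv_fin h2 hZ) (cv_fin h3 hZ).
by rewrite -!EFinM -!EFinD.
Qed.

Lemma cv_lin (X1 X2 X3 Y1 Y2 Y3 : T -> R) x1 x2 x3 c y1 y2 y3 c' :
  X1 \in Lfun P 2%:E -> X2 \in Lfun P 2%:E -> X3 \in Lfun P 2%:E ->
  Y1 \in Lfun P 2%:E -> Y2 \in Lfun P 2%:E -> Y3 \in Lfun P 2%:E ->
  cv (fun t => x1 * X1 t + x2 * X2 t + x3 * X3 t + c)%R
     (fun t => y1 * Y1 t + y2 * Y2 t + y3 * Y3 t + c')%R =
  (x1 * (y1 * cv X1 Y1 + y2 * cv X1 Y2 + y3 * cv X1 Y3) +
   x2 * (y1 * cv X2 Y1 + y2 * cv X2 Y2 + y3 * cv X2 Y3) +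
   x3 * (y1 * cv X3 Y1 + y2 * cv X3 Y2 + y3 * cv X3 Y3))%R.
Proof.
move=> h1 h2 h3 g1 g2 g3.
rewrite cv_lin_l ?L2_lin //.
rewrite (cvC X1) (cvC X2) (cvC X3) !cv_lin_l //.
by rewrite !(cvC Y1) !(cvC Y2) !(cvC Y3).
Qed.

Lemma E_lin (X1 X2 X3 : T -> R) x1 x2 x3 c :
  X1 \in Lfun P 2%:E -> X2 \in Lfun P 2%:E -> X3 \in Lfun P 2%:E ->
  fine 'E_P[fun t => x1 * X1 t + x2 * X2 t + x3 * X3 t + c]%R =
  (x1 * fine 'E_P[X1] + x2 * fine 'E_P[X2] + x3 * fine 'E_P[X3] + c)%R.
Proof.
move=> h1 h2 h3.
have Pfin : P setT \is a fin_num := fin_num_measure P _ measurableT.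
have s1 := L2Z x1 h1.
have s2 := L2Z x2 h2.
have s3 := L2Z x3 h3.
have E : (fun t => x1 * X1 t + x2 * X2 t + x3 * X3 t + c)%R =
  ((x1 \o* X1 \+ x2 \o* X2) \+ x3 \o* X3 \+ cst c)%R.
  by apply: boolp.funext => t; rewrite /=; ring.
rewrite E.
rewrite expectationD ?Lfun_subset12 ?L2D ?Lfun_cst //.
rewrite expectationD ?Lfun_subset12 ?L2D //.
rewrite expectationD ?Lfun_subset12 //.
rewrite !expectationZl ?Lfun_subset12 // expectation_cst.
rewrite (E_fin h1) (E_fin h2) (E_fin h3).
by rewrite -!EFinM -!EFinD.
Qed.

Lemma cvDl (f g h : T -> R) : f \in Lfun P 2%:E -> g \in Lfun P 2%:E ->
  h \in Lfun P 2%:E -> cv (f \+ g)%R h = (cv f h + cv g h)%R.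
Proof.
move=> hf hg hh.
by rewrite /cv covarianceDl // (cv_fin hf hh) (cv_fin hg hh).
Qed.

Lemma L2_sum (X : nat -> T -> R) k : (forall i, (i < k)%N -> X i \in Lfun P 2%:E) ->
  (fun t => \sum_(i < k) X i t)%R \in Lfun P 2%:E.
Proof.
elim: k => [|k IH] hX.
  have -> : (fun t => \sum_(i < 0) X i t)%R = cst 0%R.
    by apply: boolp.funext => t; rewrite big_ord0.
  exact: Lfun_cst.
have -> : (fun t => \sum_(i < k.+1) X i t)%R =
   ((fun t => \sum_(i < k) X i t) \+ X k)%R.
  by apply: boolp.funext => t; rewrite big_ord_recr.
apply: L2D; last exact: hX.
by apply: IH => i ik; apply: hX; exact: ltnW.
Qed.

Lemma cv_sum_l (X : nat -> T -> R) k Z : (forall i, (i < k)%N -> X i \in Lfun P 2%:E) ->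
  Z \in Lfun P 2%:E ->
  cv (fun t => \sum_(i < k) X i t)%R Z = (\sum_(i < k) cv (X i) Z)%R.
Proof.
move=> hX hZ; elim: k hX => [|k IH] hX.
  have -> : (fun t => \sum_(i < 0) X i t)%R = cst 0%R.
    by apply: boolp.funext => t; rewrite big_ord0.
  by rewrite big_ord0 /cv covariance_cst_l.
have -> : (fun t => \sum_(i < k.+1) X i t)%R =
   ((fun t => \sum_(i < k) X i t) \+ X k)%R.
  by apply: boolp.funext => t; rewrite big_ord_recr.
have hX' : forall i, (i < k)%N -> X i \in Lfun P 2%:E.
  by move=> i ik; apply: hX; exact: ltnW.
rewrite cvDl ?(L2_sum hX') ?hX //.
by rewrite IH // big_ord_recr.
Qed.

Lemma cv_sum (X Y : nat -> T -> R) k l :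
  (forall i, (i < k)%N -> X i \in Lfun P 2%:E) ->
  (forall i, (i < l)%N -> Y i \in Lfun P 2%:E) ->
  cv (fun t => \sum_(i < k) X i t)%R (fun t => \sum_(j < l) Y j t)%R =
  (\sum_(i < k) \sum_(j < l) cv (X i) (Y j))%R.
Proof.
move=> hX hY.
rewrite cv_sum_l //; last exact: L2_sum.
apply: eq_bigr => i _.
rewrite cvC cv_sum_l ?(hX _ (ltn_ord i)) //.
by apply: eq_bigr => j _; rewrite cvC.
Qed.

Lemma PhiE (X Z : T -> R) : Phi P X Z =
  (cv X X / (fine 'E_P[Z]) ^+ 2 + (fine 'E_P[X]) ^+ 2 / (fine 'E_P[Z]) ^+ 4 * cv Z Z
  - 2 * fine 'E_P[X] / (fine 'E_P[Z]) ^+ 3 * cv X Z)%R.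
Proof. by []. Qed.

Lemma E_sum (X : nat -> T -> R) k : (forall i, (i < k)%N -> X i \in Lfun P 2%:E) ->
  fine 'E_P[fun t => \sum_(i < k) X i t]%R = (\sum_(i < k) fine 'E_P[X i])%R.
Proof.
have Pfin : P setT \is a fin_num := fin_num_measure P _ measurableT.
elim: k => [|k IH] hX.
  have -> : (fun t => \sum_(i < 0) X i t)%R = cst 0%R.
    by apply: boolp.funext => t; rewrite big_ord0.
  by rewrite big_ord0 expectation_cst.
have -> : (fun t => \sum_(i < k.+1) X i t)%R =
   ((fun t => \sum_(i < k) X i t) \+ X k)%R.
  by apply: boolp.funext => t; rewrite big_ord_recr.
have hX' : forall i, (i < k)%N -> X i \in Lfun P 2%:E.
  by move=> i ik; apply: hX; exact: ltnW.
rewrite expectationD ?Lfun_subset12 ?(L2_sum hX') ?hX //.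
rewrite (E_fin (L2_sum hX')) (E_fin (hX k (ltnSn k))) -EFinD /=.
by rewrite IH // big_ord_recr.
Qed.

End H.

Lemma sum_delta1 {R : realType} (k : R) i l :
  (\sum_(j < l) (if i == (j : nat) then k else 0) = if (i < l)%N then k else 0)%R.
Proof.
elim: l => [|l IH]; first by rewrite big_ord0 ltn0.
rewrite big_ord_recr /= IH ltnS.
case: (ltngtP i l) => [il|li|eil] /=.
- by rewrite addr0.
- by rewrite addr0.
- by rewrite add0r.
Qed.

Lemma sum_delta {R : realType} (k : R) n1 n2 :
  (\sum_(i < n1) \sum_(j < n2) (if (i : nat) == (j : nat) then k else 0) =
   (minn n1 n2)%:R * k)%R.
Proof.
under eq_bigr => i _ do rewrite sum_delta1.
elim: n1 => [|n1 IH]; first by rewrite big_ord0 min0n mul0r.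
rewrite big_ord_recr /= IH.
case: (ltnP n1 n2) => h.
  rewrite (minn_idPl h).
  by rewrite mulrSr mulrDl mul1r.
by rewrite (minn_idPr (leqW h)) addr0.
Qed.

Definition proj4 {R : realType} (c : nat) (v : R * R * R * R) : R :=
  match c with 0 => v.1.1.1 | 1 => v.1.1.2 | 2 => v.1.2 | _ => v.2 end.

Lemma measurable_proj4 {R : realType} c : measurable_fun setT (@proj4 R c).
Proof.
case: c => [|[|[|c]]] /=.
- apply: measurableT_comp; first exact: measurable_fst.
  apply: measurableT_comp; first exact: measurable_fst.
  exact: measurable_fst.
- apply: measurableT_comp; first exact: measurable_snd.
  apply: measurableT_comp; first exact: measurable_fst.
  exact: measurable_fst.
- apply: measurableT_comp; first exact: measurable_snd.
  exact: measurable_fst.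
- exact: measurable_snd.
Qed.

Lemma affine_le {R : realType} (U : Type) (f g : U -> R) (c r : R) :
  (0 < r)%R -> (forall x, f x - c = r * (g x - c))%R ->
  forall x y, (f x <= f y) <-> (g x <= g y).
Proof.
move=> r0 h x y.
have ex : forall z, f z = c + r * (g z - c) by move=> z; rewrite -h; ring.
rewrite !ex lerD2l ler_pM2l // lerD2r.
by [].
Qed.

Unset Implicit Arguments.

Theorem mainTheorem7 (d : measure_display) (T : measurableType d) (R : realType)
  (P : probability T R) (A B C D : {RV P >-> R})
  (As Bs Cs Ds : nat -> {RV P >-> R}) (n m : nat) :
  (A : T -> R) \in Lfun P 2%:E -> (B : T -> R) \in Lfun P 2%:E ->
  (C : T -> R) \in Lfun P 2%:E -> (D : T -> R) \in Lfun P 2%:E ->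
  fine 'E_P[A] != 0 -> fine 'E_P[C] != 0 ->
  (0 < n)%N -> (0 < m)%N ->
  (* (A_i,B_i,C_i,D_i), i < n, are copies of (A,B,C,D) *)
  (forall i, (i < n)%N ->
     same_law P (fun t => (As i t, Bs i t, Cs i t, Ds i t))
                (fun t => (A t, B t, C t, D t))) ->
  (* (B_i,D_i), n <= i < n+m, are copies of (B,D) *)
  (forall i, (n <= i < n + m)%N ->
     same_law P (fun t => (Bs i t, Ds i t)) (fun t => (B t, D t))) ->
  (* all n + m sample vectors are mutually independent *)
  mutually_independent P [set i | (i < n + m)%N]
    (fun i => if (i < n)%N
              then events_of (fun t => (As i t, Bs i t, Cs i t, Ds i t))
              else events_of (fun t => (Bs i t, Ds i t))) ->
  let An := smean (fun i t => As i t) n in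
  let Bn := smean (fun i t => Bs i t) n in
  let Cn := smean (fun i t => Cs i t) n in
  let Dn := smean (fun i t => Ds i t) n in
  let Bnm := smean (fun i t => Bs i t) (n + m) in
  let Dnm := smean (fun i t => Ds i t) (n + m) in
  let N (a : R) : T -> R := fun t => An t + a * (fine 'E_P[B] - Bn t) in
  let M (b : R) : T -> R := fun t => Cn t + b * (fine 'E_P[D] - Dn t) in
  let Nt (a : R) : T -> R := fun t => An t + a * (Bnm t - Bn t) in
  let Mt (b : R) : T -> R := fun t => Cn t + b * (Dnm t - Dn t) in
  let r : R := m%:R / (n + m)%:R in
  [/\ (forall a b : R,
         Phi P (Nt a) (Mt b) - Phi P An Cn = r * (Phi P (N a) (M b) - Phi P An Cn)),
      (forall a : R,
         Phi P (Nt a) Cn - Phi P An Cn = r * (Phi P (N a) Cn - Phi P An Cn)),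
      (forall a b : R,
         (forall a' b' : R, Phi P (Nt a) (Mt b) <= Phi P (Nt a') (Mt b')) <->
         (forall a' b' : R, Phi P (N a) (M b) <= Phi P (N a') (M b'))) &
      (forall a : R,
         (forall a' : R, Phi P (Nt a) Cn <= Phi P (Nt a') Cn) <->
         (forall a' : R, Phi P (N a) Cn <= Phi P (N a') Cn))].

Proof.
move=> A2 B2 C2 D2 hA hC n0 m0 lawV lawW hind An Bn Cn Dn Bnm Dnm N M Nt Mt r.
pose V i := fun t => (As i t, Bs i t, Cs i t, Ds i t).
pose V0 := fun t => (A t, B t, C t, D t).
pose W i := fun t => (Bs i t, Ds i t).
pose W0 := fun t => (B t, D t).
pose comp c i := fun t => proj4 c (V i t).
pose base c := fun t => proj4 c (V0 t).
pose valid c i := (i < n)%N || ((i < n + m)%N && ((c == 1%N) || (c == 3%N))).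
have mV : forall i, measurable_fun setT (V i).
  move=> i; apply: measurable_fun_pair; last exact: measurable_funPT.
  apply: measurable_fun_pair; last exact: measurable_funPT.
  apply: measurable_fun_pair; exact: measurable_funPT.
have mV0 : measurable_fun setT V0.
  apply: measurable_fun_pair; last exact: measurable_funPT.
  apply: measurable_fun_pair; last exact: measurable_funPT.
  apply: measurable_fun_pair; exact: measurable_funPT.
have mW : forall i, measurable_fun setT (W i).
  move=> i; apply: measurable_fun_pair; exact: measurable_funPT.
have mW0 : measurable_fun setT W0.
  apply: measurable_fun_pair; exact: measurable_funPT.
have base2 : forall c, base c \in Lfun P 2%:E.
  by case=> [|[|[|c]]].
have key : forall c c' i, valid c i -> valid c' i ->
  [/\ comp c i \in Lfun P 2%:E, ('E_P[comp c i] = 'E_P[base c])%E &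
      covariance P (comp c i) (comp c' i) = covariance P (base c) (base c')].
  move=> c c' i vc vc'.
  case: (ltnP i n) => hi.
    exact: (law_cv (mV i) mV0 (lawV i hi) (measurable_proj4 c)
                   (measurable_proj4 c') (base2 c) (base2 c')).
  have hW : same_law P (W i) W0.
    apply: lawW; rewrite hi /=.
    by move: vc; rewrite /valid ltnNge hi /= => /andP[].
  move: vc vc'; rewrite /valid ltnNge hi /=.
  move=> /andP[_ /orP[/eqP-> | /eqP->]] /andP[_ /orP[/eqP-> | /eqP->]].
  - exact: (law_cv (mW i) mW0 hW measurable_fst measurable_fst B2 B2).
  - exact: (law_cv (mW i) mW0 hW measurable_fst measurable_snd B2 D2).
  - exact: (law_cv (mW i) mW0 hW measurable_snd measurable_fst D2 B2).
  - exact: (law_cv (mW i) mW0 hW measurable_snd measurable_snd D2 D2).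
have vlt : forall c i, valid c i -> (i < n + m)%N.
  by move=> c i /orP[h|/andP[h _]] //; exact: ltn_addr.
have ev : forall c i (S : set R), valid c i -> measurable S ->
    (if (i < n)%N then events_of (V i) else events_of (W i)) (comp c i @^-1` S).
  move=> c i S vc mS; case: ifPn => hi.
    exists (proj4 c @^-1` S); split; last reflexivity.
    by have := measurable_proj4 c measurableT mS; rewrite setTI.
  move: vc; rewrite /valid (negbTE hi) /= => /andP[_ /orP[/eqP-> | /eqP->]].
  - exists (fst @^-1` S); split; last reflexivity.
    by rewrite -[X in measurable X]setTI; exact: measurable_fst.
  - exists (snd @^-1` S); split; last reflexivity.
    by rewrite -[X in measurable X]setTI; exact: measurable_snd.
have indep : forall c c' i j, valid c i -> valid c' j -> i != j ->
    cv P (comp c i) (comp c' j) = 0.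
  move=> c c' i j vi vj ij.
  have [ci _ _] := key c c i vi vi.
  have [cj _ _] := key c' c' j vj vj.
  apply: indep_cv => //.
  - exact: measurableT_comp (measurable_proj4 _) (mV _).
  - exact: measurableT_comp (measurable_proj4 _) (mV _).
  move=> S1 S2 mS1 mS2.
  pose e k := if k == i then comp c i @^-1` S1 else comp c' j @^-1` S2.
  have h := hind [:: i; j] e.
  have ji : (j == i) = false by rewrite eq_sym (negbTE ij).
  have capE : \bigcap_(k in [set` [:: i; j]]) e k = e i `&` e j.
    apply/seteqP; split => [x hx | x [hxi hxj] k].
      by split; apply: hx; rewrite /= !inE eqxx ?orbT.
    by rewrite /= !inE => /orP[]/eqP->.
  rewrite capE big_cons big_cons big_nil mule1 /e eqxx ji in h.
  apply: h.
  - by rewrite /= inE ij.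
  - move=> k; rewrite /= !inE => /orP[]/eqP->.
    + exact: vlt vi.
    + exact: vlt vj.
  - move=> k; rewrite !inE => /orP[]/eqP->; rewrite /e ?eqxx ?ji.
    + exact: ev.
    + exact: ev.
have L2c : forall c i, valid c i -> comp c i \in Lfun P 2%:E.
  by move=> c i v; case: (key c c i v v).
pose S c k := fun t => \sum_(i < k) comp c i t.
have L2S : forall c k, (forall i, (i < k)%N -> valid c i) -> S c k \in Lfun P 2%:E.
  by move=> c k vk; apply: L2_sum => i /vk/L2c.
have tabC : forall c c' k l, (forall i, (i < k)%N -> valid c i) ->
    (forall j, (j < l)%N -> valid c' j) ->
    cv P (S c k) (S c' l) = (minn k l)%:R * cv P (base c) (base c').
  move=> c c' k l vk vl.
  rewrite /S cv_sum; last 2 first.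
  - by move=> i /vk/L2c.
  - by move=> j /vl/L2c.
  rewrite -sum_delta; apply: eq_bigr => i _; apply: eq_bigr => j _.
  have vi := vk i (ltn_ord i).
  have vj := vl j (ltn_ord j).
  case: eqP => [eij|nij].
    rewrite -eij in vj *.
    by case: (key c c' i vi vj) => _ _ hc; rewrite /cv hc.
  by apply: indep => //; apply/eqP.
have tabE : forall c k, (forall i, (i < k)%N -> valid c i) ->
    fine 'E_P[S c k] = k%:R * fine 'E_P[base c].
  move=> c k vk.
  rewrite /S E_sum; last by move=> i /vk/L2c.
  rewrite (eq_bigr (fun _ => fine 'E_P[base c])); last first.
    by move=> i _; case: (key c c i (vk i (ltn_ord i)) (vk i (ltn_ord i))) => _ ->.
  by rewrite sumr_const card_ord mulr_natl.
have v0 : forall c i, (i < n)%N -> valid c i by move=> c i h; rewrite /valid h.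
have vA := v0 0%N; have vB := v0 1%N; have vC := v0 2%N; have vD := v0 3%N.
have vBm : forall i, (i < n + m)%N -> valid 1%N i.
  by move=> i h; rewrite /valid h orbT.
have vDm : forall i, (i < n + m)%N -> valid 3%N i.
  by move=> i h; rewrite /valid h orbT.
have n0' : n%:R != 0 :> R by rewrite pnatr_eq0 -lt0n.
have nm0' : (n + m)%:R != 0 :> R by rewrite pnatr_eq0 -lt0n addn_gt0 n0.
have nm0'' : n%:R + m%:R != 0 :> R by rewrite -natrD.
have hA' : fine 'E_P[base 0%N] != 0 := hA.
have hC' : fine 'E_P[base 2%N] != 0 := hC.
have eAn : An = (fun t => n%:R^-1 * S 0%N n t + 0 * S 0%N n t + 0 * S 0%N n t + 0).
  by apply: boolp.funext => t; rewrite /An /smean /S /comp /=; ring.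
have eCn : Cn = (fun t => n%:R^-1 * S 2%N n t + 0 * S 2%N n t + 0 * S 2%N n t + 0).
  by apply: boolp.funext => t; rewrite /Cn /smean /S /comp /=; ring.
have eNt : forall a, Nt a = (fun t => n%:R^-1 * S 0%N n t
    + (a / (n + m)%:R) * S 1%N (n + m)%N t + (- (a / n%:R)) * S 1%N n t + 0).
  by move=> a; apply: boolp.funext => t;
     rewrite /Nt /An /Bnm /Bn /smean /S /comp /=; ring.
have eMt : forall b, Mt b = (fun t => n%:R^-1 * S 2%N n t
    + (b / (n + m)%:R) * S 3%N (n + m)%N t + (- (b / n%:R)) * S 3%N n t + 0).
  by move=> b; apply: boolp.funext => t;
     rewrite /Mt /Cn /Dnm /Dn /smean /S /comp /=; ring.
have eEB : fine 'E_P[B] = fine 'E_P[base 1%N] by reflexivity.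
have eED : fine 'E_P[D] = fine 'E_P[base 3%N] by reflexivity.
have eN : forall a, N a = (fun t => n%:R^-1 * S 0%N n t
    + (- (a / n%:R)) * S 1%N n t + 0 * S 0%N n t + a * fine 'E_P[base 1%N]).
  by move=> a; apply: boolp.funext => t;
     rewrite /N /An /Bn /smean /S /comp eEB /=; ring.
have eM : forall b, M b = (fun t => n%:R^-1 * S 2%N n t
    + (- (b / n%:R)) * S 3%N n t + 0 * S 2%N n t + b * fine 'E_P[base 3%N]).
  by move=> b; apply: boolp.funext => t;
     rewrite /M /Cn /Dn /smean /S /comp eED /=; ring.
have L0n := L2S 0%N n vA.
have L1n := L2S 1%N n vB.
have L2n := L2S 2%N n vC.
have L3n := L2S 3%N n vD.
have L1m := L2S 1%N (n + m)%N vBm.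
have L3m := L2S 3%N (n + m)%N vDm.
have EAn : fine 'E_P[An] = fine 'E_P[base 0%N].
  by rewrite eAn E_lin // !tabE //; field; rewrite ?n0' ?nm0'' ?hA' ?hC'.
have ECn : fine 'E_P[Cn] = fine 'E_P[base 2%N].
  by rewrite eCn E_lin // !tabE //; field; rewrite ?n0' ?nm0'' ?hA' ?hC'.
have ENt : forall a, fine 'E_P[Nt a] = fine 'E_P[base 0%N].
  by move=> a; rewrite eNt E_lin // !tabE //; field; rewrite ?n0' ?nm0'' ?hA' ?hC'.
have EMt : forall b, fine 'E_P[Mt b] = fine 'E_P[base 2%N].
  by move=> b; rewrite eMt E_lin // !tabE //; field; rewrite ?n0' ?nm0'' ?hA' ?hC'.
have EN : forall a, fine 'E_P[N a] = fine 'E_P[base 0%N].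
  by move=> a; rewrite eN E_lin // !tabE //; field; rewrite ?n0' ?nm0'' ?hA' ?hC'.
have EM : forall b, fine 'E_P[M b] = fine 'E_P[base 2%N].
  by move=> b; rewrite eM E_lin // !tabE //; field; rewrite ?n0' ?nm0'' ?hA' ?hC'.
have mnm : minn n (n + m) = n := minn_idPl (leq_addr m n).
have mmn : minn (n + m) n = n by rewrite minnC.
have part1 : forall a b,
    Phi P (Nt a) (Mt b) - Phi P An Cn = r * (Phi P (N a) (M b) - Phi P An Cn).
  move=> a b; rewrite !PhiE ENt EMt EAn ECn EN EM.
  rewrite (eNt a) (eMt b) eAn eCn (eN a) (eM b).
  rewrite !cv_lin // !tabC // !minnn mnm mmn /r.
  by field; rewrite n0' hC' nm0''.
have part2 : forall a,
    Phi P (Nt a) Cn - Phi P An Cn = r * (Phi P (N a) Cn - Phi P An Cn).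
  move=> a; rewrite !PhiE ENt ECn EAn EN.
  rewrite (eNt a) eAn eCn (eN a).
  rewrite !cv_lin // !tabC // !minnn mnm mmn /r.
  by field; rewrite n0' hC' nm0''.
have hr : 0 < r by rewrite /r divr_gt0 // ltr0n // addn_gt0 n0.
split => //.
- move=> a b.
  have hab := @affine_le R (R * R)%type (fun z => Phi P (Nt z.1) (Mt z.2))
    (fun z => Phi P (N z.1) (M z.2)) _ _ hr (fun z => part1 z.1 z.2).
  split => h a' b'.
    by apply: (hab (a, b) (a', b')).1; exact: h.
  by apply: (hab (a, b) (a', b')).2; exact: h.
- move=> a.
  have hab := @affine_le R R (fun z => Phi P (Nt z) Cn)
    (fun z => Phi P (N z) Cn) _ _ hr part2.
  split => h a'.
    by apply: (hab a a').1; exact: h.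
  by apply: (hab a a').2; exact: h.
Qed.
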